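(* Let $B\in\mathbb{R}^{n\times d}$ with $\|B\|=R\in(0,\infty)$, $g^*:\mathbb{R}^n\to\mathbb{R}\cup\{+\infty\}$ proper, lower semicontinuous and $\gamma$-strongly convex ($\gamma\ge0$), $\ell:\mathbb{R}^d\to\mathbb{R}\cup\{+\infty\}$ proper, lower semicontinuous and $\sigma$-strongly convex ($\sigma\ge0$). For the PDA$^2$ algorithm in the context, for all $(u,v)\in\mathcal{X}\times\mathcal{Y}$ and $k\ge1$, $$\begin{aligned}\psi_k(y_k)\ge\;&\psi_{k-1}(y_{k-1})+\frac{1+\gamma A_{k-1}}{2}\|y_k-y_{k-1}\|^2+a_k\big(g^*(y_k)+\langle-Bx_k,y_k-v\rangle\big)\\&+a_k\langle B(x_k-x_{k-1}),y_k-v\rangle-a_{k-1}\langle B(x_{k-1}-x_{k-2}),y_{k-1}-v\rangle-a_{k-1}\langle B(x_{k-1}-x_{k-2}),y_k-y_{k-1}\rangle,\end{aligned}$$ $$\phi_k(x_k)\ge\phi_{k-1}(x_{k-1})+\frac{1+\sigma A_{k-1}}{2}\|x_k-x_{k-1}\|^2+a_k\big(\langle x_k-u,B^Ty_k\rangle+\ell(x_k)\big).$$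
   Context: Norms are Euclidean; $\sigma$-strong convexity of $f$ means $f((1-\alpha)x+\alpha\hat x)\le(1-\alpha)f(x)+\alpha f(\hat x)-\frac\sigma2\alpha(1-\alpha)\|\hat x-x\|^2$ for all $x,\hat x$, $\alpha\in(0,1)$. $\mathcal{X}=\mathrm{dom}(\ell)$, $\mathcal{Y}=\mathrm{dom}(g^* )$. PDA$^2$ algorithm: given $(x_0,y_0),(u,v)\in\mathcal{X}\times\mathcal{Y}$, set $a_0=A_0=0$, $x_{-1}=x_0$, $\phi_0(x)=\frac12\|x-x_0\|^2$, $\psi_0(y)=\frac12\|y-y_0\|^2$. For $k=1,2,\dots$: $a_k=\frac{\sqrt{(1+\sigma A_{k-1})(1+\gamma A_{k-1})}}{\sqrt2R}$, $A_k=A_{k-1}+a_k$; $\bar x_{k-1}=x_{k-1}+\frac{a_{k-1}}{a_k}(x_{k-1}-x_{k-2})$; $\psi_k(y)=\psi_{k-1}(y)+a_k(\langle-B\bar x_{k-1},y-v\rangle+g^*(y))$, $y_k=\arg\min_{y}\psi_k(y)$; $\phi_k(x)=\phi_{k-1}(x)+a_k(\langle x-u,B^Ty_k\rangle+\ell(x))$, $x_k=\arg\min_x\phi_k(x)$. *)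

(* Defs.v *)
From HB Require Import structures.
From mathcomp Require Import all_boot all_order all_algebra.
From mathcomp Require Import all_classical all_reals all_analysis.
Set Implicit Arguments. Unset Strict Implicit. Unset Printing Implicit Defensive.
Import Order.TTheory GRing.Theory Num.Theory.
Import numFieldNormedType.Exports.
Local Open Scope ring_scope.

Section Defs.
Variable R : realType.

Definition dotv m (u v : 'cV[R]_m) : R := \sum_(i < m) u i ord0 * v i ord0.
Definition normv m (u : 'cV[R]_m) : R := Num.sqrt (dotv u u).

Definition is_opnorm n d (B : 'M[R]_(n, d)) (r : R) : Prop :=
  (forall x : 'cV[R]_d, normv (B *m x) <= r * normv x) /\
  (forall c : R, (forall x : 'cV[R]_d, normv (B *m x) <= c * normv x) -> r <= c).

Local Open Scope ereal_scope.

Definition proper_fun m (f : 'cV[R]_m -> \bar R) : Prop :=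
  (forall x, f x != -oo) /\ (exists x, f x < +oo).

Definition edom m (f : 'cV[R]_m -> \bar R) : set 'cV[R]_m := [set x | f x < +oo].

Definition strongly_convex m (s : R) (f : 'cV[R]_m -> \bar R) : Prop :=
  forall (x xh : 'cV[R]_m) (al : R), (0 < al < 1)%R ->
    f ((1 - al) *: x + al *: xh)%R <=
    (1 - al)%:E * f x + al%:E * f xh
      - (s / 2 * al * (1 - al) * normv (xh - x)%R ^+ 2)%:E.

Local Close Scope ereal_scope.

Fixpoint stepsAA (sigma gamma Rb : R) (k : nat) : R * R :=
  match k with
  | 0 => (0, 0)
  | k'.+1 =>
      let Ap := (stepsAA sigma gamma Rb k').2 in
      let ak := Num.sqrt ((1 + sigma * Ap) * (1 + gamma * Ap)) / (Num.sqrt 2 * Rb) in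
      (ak, Ap + ak)
  end.
Definition step_a sigma gamma Rb k := (stepsAA sigma gamma Rb k).1.
Definition step_A sigma gamma Rb k := (stepsAA sigma gamma Rb k).2.

(* extrapolated point  bar x_{k-1} = x_{k-1} + a_{k-1}/a_k (x_{k-1} - x_{k-2}),
   for k >= 1, with x_{-1} = x_0 (realised by truncated subtraction k-2). *)
Definition xbar d (a : nat -> R) (x : nat -> 'cV[R]_d) (k : nat) : 'cV[R]_d :=
  x (k - 1)%N + (a (k - 1)%N / a k) *: (x (k - 1)%N - x (k - 2)%N).

Local Open Scope ereal_scope.

Definition psi_fun n d (B : 'M[R]_(n, d)) (gs : 'cV[R]_n -> \bar R)
    (a : nat -> R) (x : nat -> 'cV[R]_d) (y0 v : 'cV[R]_n) (k : nat)
    (y : 'cV[R]_n) : \bar R :=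
  (normv (y - y0)%R ^+ 2 / 2)%:E +
  \sum_(1 <= i < k.+1) (a i)%:E *
      ((dotv (- (B *m xbar a x i))%R (y - v)%R)%:E + gs y).

Definition phi_fun n d (B : 'M[R]_(n, d)) (l : 'cV[R]_d -> \bar R)
    (a : nat -> R) (y : nat -> 'cV[R]_n) (x0 u : 'cV[R]_d) (k : nat)
    (x : 'cV[R]_d) : \bar R :=
  (normv (x - x0)%R ^+ 2 / 2)%:E +
  \sum_(1 <= i < k.+1) (a i)%:E *
      ((dotv (x - u)%R (B^T *m y i))%:E + l x).

End Defs.

(* Main.v *)
From HB Require Import structures.
From mathcomp Require Import all_boot all_order all_algebra.
From mathcomp Require Import all_classical all_reals all_analysis.
From mathcomp Require Import ring lra.
Require Import Defs.
Set Implicit Arguments. Unset Strict Implicit. Unset Printing Implicit Defensive.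
Import Order.TTheory GRing.Theory Num.Theory.
Import numFieldNormedType.Exports.
Local Open Scope ring_scope.

Section Aux.
Variable R : realType.

Lemma dotv_ge0 m (u : 'cV[R]_m) : 0 <= dotv u u.
Proof. by rewrite /dotv; apply: sumr_ge0 => i _; rewrite -expr2 sqr_ge0. Qed.

Lemma normv2 m (u : 'cV[R]_m) : normv u ^+ 2 = dotv u u.
Proof. exact: sqr_sqrtr (dotv_ge0 u). Qed.

Definition Fe m (g : 'cV[R]_m -> \bar R) (a : nat -> R) (h : nat -> 'cV[R]_m -> R)
  (y0 : 'cV[R]_m) (j : nat) (y : 'cV[R]_m) : \bar R :=
  ((normv (y - y0) ^+ 2 / 2)%:E +
  \sum_(1 <= i < j.+1) (a i)%:E * ((h i y)%:E + g y))%E.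

Definition Fr m (a : nat -> R) (h : nat -> 'cV[R]_m -> R)
  (y0 : 'cV[R]_m) (j : nat) (y : 'cV[R]_m) (G : R) : R :=
  normv (y - y0) ^+ 2 / 2 + \sum_(1 <= i < j.+1) a i * (h i y + G).

Lemma Fe_fin m g a h y0 j (y : 'cV[R]_m) G :
  g y = G%:E -> Fe g a h y0 j y = (Fr a h y0 j y G)%:E.
Proof.
move=> E; rewrite /Fe /Fr E EFinD; congr (_ + _)%E.
rewrite -sumEFin; apply: eq_bigr => i _; by rewrite EFinM EFinD.
Qed.

Lemma Fe_inf m g a h y0 j (y : 'cV[R]_m) :
  (forall i, (1 <= i)%N -> 0 < a i) -> g y = +oo%E -> (1 <= j)%N ->
  Fe g a h y0 j y = +oo%E.
Proof.
move=> apos E j1; rewrite /Fe E.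
have T : forall i, (1 <= i)%N -> ((a i)%:E * ((h i y)%:E + +oo) = +oo)%E.
  move=> i i1; rewrite addey // mulry gtr0_sg ?apos // mul1e //.
have S0 : (0 <= \sum_(1 <= i < j) (a i)%:E * ((h i y)%:E + +oo))%E.
  rewrite big_nat_cond; apply: sume_ge0 => i /andP[/andP[i1 _] _].
  by rewrite T.
rewrite big_nat_recr //= T // addey; last first.
  by apply/negP => /eqP SE; rewrite SE leeNy_eq in S0.
by rewrite addey.
Qed.


Lemma lim_alpha (P0 P1 K : R) : 0 <= K ->
  (forall al : R, 0 < al < 1 -> P0 <= P1 - (1 - al) * K) -> P0 <= P1 - K.
Proof.
move=> K0 H; rewrite leNgt; apply/negP => Hlt.
have H2 := H (1/2) ltac:(lra).
have Kp : 0 < K by lra.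
pose t := P0 - P1 + K.
have tp : 0 < t by rewrite /t; lra.
have tK : t <= K / 2 by rewrite /t; lra.
have al0 : 0 < t / (2 * K) by apply: divr_gt0 => //; lra.
have al1 : t / (2 * K) < 1.
  by rewrite ltr_pdivrMr ?mulr_gt0 //; lra.
have := H (t / (2 * K)) ltac:(lra).
have -> : (1 - t / (2 * K)) * K = K - t / 2 by field; lra.
rewrite /t; lra.
Qed.

Lemma Fr_split m a h (y0 : 'cV[R]_m) j y G :
  Fr a h y0 j y G = normv (y - y0) ^+ 2 / 2 + \sum_(1 <= i < j.+1) a i * h i y
     + (\sum_(1 <= i < j.+1) a i) * G.
Proof.
rewrite /Fr -addrA; congr (_ + _); rewrite mulr_suml -big_split /=.
by apply: eq_bigr => i _; ring.
Qed.

Lemma norm_comb m (p q y0 : 'cV[R]_m) (al : R) :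
  normv ((1 - al) *: p + al *: q - y0) ^+ 2 =
  (1 - al) * normv (p - y0) ^+ 2 + al * normv (q - y0) ^+ 2
  - al * (1 - al) * normv (q - p) ^+ 2.
Proof.
rewrite !normv2 /dotv !mulr_sumr -big_split -sumrB /=.
by apply: eq_bigr => i _; rewrite !mxE; ring.
Qed.


Lemma key m (g : 'cV[R]_m -> \bar R) (c : R) (a : nat -> R)
  (h : nat -> 'cV[R]_m -> R) (yk : nat -> 'cV[R]_m) (v : 'cV[R]_m) (j : nat) :
  (forall i, 0 <= a i) -> (forall i, (1 <= i)%N -> 0 < a i) ->
  proper_fun g -> strongly_convex c g -> 0 <= c ->
  (g v < +oo)%E -> (g (yk 0%N) < +oo)%E ->
  (forall i (p q : 'cV[R]_m) al,
      h i ((1 - al) *: p + al *: q) = (1 - al) * h i p + al * h i q) ->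
  (forall k, (1 <= k)%N -> forall z,
      (Fe g a h (yk 0%N) k (yk k) <= Fe g a h (yk 0%N) k z)%E) ->
  Fe g a h (yk 0%N) j.+1 (yk j.+1) = +oo%E \/
  exists G1 P0 P1, g (yk j.+1) = G1%:E /\ Fe g a h (yk 0%N) j (yk j) = P0%:E /\
   Fe g a h (yk 0%N) j.+1 (yk j.+1) = P1%:E /\
   P0 + (1 + c * \sum_(1 <= i < j.+1) a i) / 2 * normv (yk j.+1 - yk j) ^+ 2
      + a j.+1 * (h j.+1 (yk j.+1) + G1) <= P1.
Proof.
move=> a0 apos [gN gex] gsc c0 gv gy0 hlin Hmin.
have gfin : forall y, (g y < +oo)%E -> exists G, g y = G%:E.
  move=> y; case E: (g y) => [r| |] //; first by exists r.
  by move: (gN y); rewrite E.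
have [Gv HGv] := gfin _ gv.
have Hmin' : forall k z, (Fe g a h (yk 0%N) k (yk k) <= Fe g a h (yk 0%N) k z)%E.
  case=> [|k] z; last exact: Hmin.
  rewrite /Fe !big_geq // !adde0 lee_fin subrr.
  have -> : normv (0 : 'cV[R]_m) = 0.
    by rewrite /normv /dotv big1 ?sqrtr0 // => i _; rewrite mxE mul0r.
  by rewrite expr0n /= mul0r divr_ge0 // sqr_ge0.
have [G0 HG0] : exists G0, g (yk j) = G0%:E.
  apply: gfin; case: j {Hmin'} => [|j] //.
  rewrite ltey; apply/eqP => E.
  have := Hmin j.+1 isT v.
  by rewrite (Fe_inf h (yk 0%N) apos E) // (Fe_fin a h (yk 0%N) _ HGv) leye_eq.
case E1: (g (yk j.+1)) => [G1| |]; last by move: (gN (yk j.+1)); rewrite E1.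
  2: by left; apply: Fe_inf.
right; exists G1, (Fr a h (yk 0%N) j (yk j) G0), (Fr a h (yk 0%N) j.+1 (yk j.+1) G1).
split => //; split; first exact: Fe_fin.
split; first exact: Fe_fin.
set p := yk j; set q := yk j.+1; set y0 := yk 0%N.
set S := \sum_(1 <= i < j.+1) a i.
set K := (1 + c * S) / 2 * normv (q - p) ^+ 2.
have S0 : 0 <= S by apply: sumr_ge0.
have K0 : 0 <= K by rewrite /K mulr_ge0 ?sqr_ge0 // divr_ge0 // addr_ge0 // mulr_ge0.
have -> : Fr a h y0 j.+1 q G1 = Fr a h y0 j q G1 + a j.+1 * (h j.+1 q + G1).
  by rewrite /Fr big_nat_recr //= addrA.
suff : Fr a h y0 j p G0 <= Fr a h y0 j q G1 - K by lra.
apply: lim_alpha => // al Hal.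
set z := (1 - al) *: p + al *: q.
have Hc := gsc p q al Hal.
rewrite HG0 E1 -!EFinM -EFinD in Hc.
have [Gz HGz] : exists Gz, g z = Gz%:E.
  by apply: gfin; apply: le_lt_trans Hc _; apply: ltry.
have Hm := Hmin' j z.
rewrite (Fe_fin a h y0 _ HG0) (Fe_fin a h y0 _ HGz) lee_fin in Hm.
rewrite HGz lee_fin in Hc.
have Hz : \sum_(1 <= i < j.+1) a i * h i z =
   (1 - al) * \sum_(1 <= i < j.+1) a i * h i p + al * \sum_(1 <= i < j.+1) a i * h i q.
  rewrite !mulr_sumr -big_split /=; apply: eq_bigr => i _; rewrite /z hlin; ring.
have SG := ler_wpM2l S0 Hc.
have X : Fr a h y0 j p G0 <=
    (1 - al) * Fr a h y0 j p G0 + al * Fr a h y0 j q G1 - al * ((1 - al) * K).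
  apply: le_trans Hm _.
  rewrite !Fr_split -/S Hz /z norm_comb -/z /K.
  move: SG; set Hp := \sum_(1 <= i < j.+1) a i * h i p.
  set Hq := \sum_(1 <= i < j.+1) a i * h i q.
  move=> SG; nra.
have Y : al * (Fr a h y0 j p G0 - (Fr a h y0 j q G1 - (1 - al) * K)) <= 0 by nra.
rewrite pmulr_rle0 in Y; last by case/andP: Hal.
lra.
Qed.


Lemma decomp n d (B : 'M[R]_(n, d)) (a1 a0 : R) (x1 x0 x_ : 'cV[R]_d)
  (q p v : 'cV[R]_n) : a1 != 0 ->
  a1 * dotv (- (B *m (x0 + (a0 / a1) *: (x0 - x_)))) (q - v) =
  a1 * dotv (- (B *m x1)) (q - v) +
  (a1 * dotv (B *m (x1 - x0)) (q - v) - a0 * dotv (B *m (x0 - x_)) (p - v)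
   - a0 * dotv (B *m (x0 - x_)) (q - p)).
Proof.
move=> a1n0; set c := a0 / a1.
have -> : a0 = c * a1 by rewrite /c divfK.
rewrite mulmxDr !mulmxBr -scalemxAr mulmxBr.
move: (B *m x1) (B *m x0) (B *m x_) => X1 X0 X_.
rewrite /dotv !mulr_sumr -!sumrB -!big_split /=.
by apply: eq_bigr => i _; rewrite !mxE; ring.
Qed.

Lemma step_nonneg (sigma gamma Rb : R) k : 0 < Rb -> 0 <= sigma -> 0 <= gamma ->
  0 <= step_A sigma gamma Rb k /\ 0 <= step_a sigma gamma Rb k.
Proof.
move=> Rp s0 g0; elim: k => [|k [IH1 IH2]]; first by rewrite /step_A /step_a /=.
have ap : 0 <= step_a sigma gamma Rb k.+1.
  rewrite /step_a /=; apply: divr_ge0; first exact: sqrtr_ge0.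
  by apply: mulr_ge0; [exact: sqrtr_ge0 | exact: ltW].
split => //; rewrite /step_A /=; apply: addr_ge0 => //.
Qed.

Lemma step_pos (sigma gamma Rb : R) k : 0 < Rb -> 0 <= sigma -> 0 <= gamma ->
  0 < step_a sigma gamma Rb k.+1.
Proof.
move=> Rp s0 g0; have [A0 _] := step_nonneg k Rp s0 g0.
move: A0; rewrite /step_a /step_A /= => A0.
apply: divr_gt0; last by apply: mulr_gt0 => //; rewrite sqrtr_gt0.
rewrite sqrtr_gt0; apply: mulr_gt0; apply: ltr_wpDr => //; exact: mulr_ge0.
Qed.

Lemma stepA_sum (sigma gamma Rb : R) k :
  step_A sigma gamma Rb k = \sum_(1 <= i < k.+1) step_a sigma gamma Rb i.
Proof.
elim: k => [|k IH]; first by rewrite big_geq.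
by rewrite big_nat_recr //= -IH.
Qed.

End Aux.
Theorem lemma2 (R : realType) (n d : nat) (B : 'M[R]_(n, d)) (Rb : R)
  (gs : 'cV[R]_n -> \bar R) (l : 'cV[R]_d -> \bar R) (gamma sigma : R)
  (x : nat -> 'cV[R]_d) (y : nat -> 'cV[R]_n) (u : 'cV[R]_d) (v : 'cV[R]_n) :
  0 < Rb -> is_opnorm B Rb ->
  0 <= gamma -> proper_fun gs -> lower_semicontinuous gs -> strongly_convex gamma gs ->
  0 <= sigma -> proper_fun l -> lower_semicontinuous l -> strongly_convex sigma l ->
  edom l (x 0%N) -> edom gs (y 0%N) -> edom l u -> edom gs v ->
  (forall k : nat, (1 <= k)%N -> forall z : 'cV[R]_n,
     (psi_fun B gs (step_a sigma gamma Rb) x (y 0%N) v k (y k)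
       <= psi_fun B gs (step_a sigma gamma Rb) x (y 0%N) v k z)%E) ->
  (forall k : nat, (1 <= k)%N -> forall z : 'cV[R]_d,
     (phi_fun B l (step_a sigma gamma Rb) y (x 0%N) u k (x k)
       <= phi_fun B l (step_a sigma gamma Rb) y (x 0%N) u k z)%E) ->
  forall k : nat, (1 <= k)%N ->
    let a := step_a sigma gamma Rb in
    let A := step_A sigma gamma Rb in
    let psi := psi_fun B gs a x (y 0%N) v in
    let phi := phi_fun B l a y (x 0%N) u in
    (psi k (y k) >=
       psi (k - 1)%N (y (k - 1)%N)
       + ((1 + gamma * A (k - 1)%N) / 2 * normv (y k - y (k - 1)%N) ^+ 2)%:E
       + (a k)%:E * (gs (y k) + (dotv (- (B *m x k)) (y k - v))%:E)
       + (a k * dotv (B *m (x k - x (k - 1)%N)) (y k - v)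
          - a (k - 1)%N * dotv (B *m (x (k - 1)%N - x (k - 2)%N)) (y (k - 1)%N - v)
          - a (k - 1)%N * dotv (B *m (x (k - 1)%N - x (k - 2)%N)) (y k - y (k - 1)%N))%:E)%E
    /\
    (phi k (x k) >=
       phi (k - 1)%N (x (k - 1)%N)
       + ((1 + sigma * A (k - 1)%N) / 2 * normv (x k - x (k - 1)%N) ^+ 2)%:E
       + (a k)%:E * ((dotv (x k - u) (B^T *m y k))%:E + l (x k)))%E.
Proof.
move=> Rp Bn g0 gsp gslsc gsc s0 lp llsc lsc lx0 gy0 lu gv Hpsi Hphi k k1 a A psi phi.
case: k k1 => [//|j] _.
rewrite !subSS !subn0.
have a0 : forall i, 0 <= a i by move=> i; have [] := step_nonneg i Rp s0 g0.
have apos : forall i, (1 <= i)%N -> 0 < a i.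
  by case=> [//|i] _; apply: step_pos.
have AS : A j = \sum_(1 <= i < j.+1) a i by rewrite /A stepA_sum.
split.
- pose h i (z : 'cV[R]_n) := dotv (- (B *m xbar a x i)) (z - v).
  have hlin : forall i (p q : 'cV[R]_n) al,
      h i ((1 - al) *: p + al *: q) = (1 - al) * h i p + al * h i q.
    move=> i p q al; rewrite /h /dotv !mulr_sumr -big_split /=.
    by apply: eq_bigr => t _; rewrite !mxE; ring.
  have := @key R n gs gamma a h y v j a0 apos gsp gsc g0 gv gy0 hlin Hpsi.
  change (psi j.+1 (y j.+1)) with (Fe gs a h (y 0%N) j.+1 (y j.+1)).
  change (psi j (y j)) with (Fe gs a h (y 0%N) j (y j)).
  case=> [-> | [G1 [P0 [P1 [HG1 [HP0 [HP1 Hle]]]]]]]; first exact: leey.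
  rewrite HG1 HP0 HP1 -[(G1%:E + _)%E]EFinD -EFinM -!EFinD lee_fin.
  move: Hle; rewrite /h /xbar !subSS !subn0 -AS.
  rewrite mulrDr (@decomp R n d B (a j.+1) (a j) (x j.+1) (x j) (x (j - 1)%N) (y j.+1) (y j) v);
    last by rewrite gt_eqF // apos.
  lra.
- pose h i (z : 'cV[R]_d) := dotv (z - u) (B^T *m y i).
  have hlin : forall i (p q : 'cV[R]_d) al,
      h i ((1 - al) *: p + al *: q) = (1 - al) * h i p + al * h i q.
    move=> i p q al; rewrite /h /dotv !mulr_sumr -big_split /=.
    by apply: eq_bigr => t _; rewrite !mxE; ring.
  have := @key R d l sigma a h x u j a0 apos lp lsc s0 lu lx0 hlin Hphi.
  change (phi j.+1 (x j.+1)) with (Fe l a h (x 0%N) j.+1 (x j.+1)).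
  change (phi j (x j)) with (Fe l a h (x 0%N) j (x j)).
  case=> [-> | [G1 [P0 [P1 [HG1 [HP0 [HP1 Hle]]]]]]]; first exact: leey.
  rewrite HG1 HP0 HP1 -[(_ + G1%:E)%E]EFinD -EFinM -!EFinD lee_fin.
  move: Hle; rewrite /h -AS.
  lra.
Qed.
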